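(* There exist absolute constants $c,C>0$ such that the following holds. Let $G=(V,E)$ be a finite connected triangle-free non-bipartite graph satisfying $CD(0,\infty)$. Then the eigenvalues $0=\lambda_1<\lambda_2\le\cdots\le\lambda_{|V|}$ of the Laplacian $\Delta$ satisfy \[ \frac{c}{dD^2}\leq \lambda_2\leq \cdots\leq \lambda_{|V|}\leq 2-\frac{C}{dD^2}, \] where $d$ is the maximal vertex degree and $D$ the diameter of $G$.
   Context: $G$ is a finite simple connected graph with degrees $d_x$. The Laplacian is $\Delta f(x)=\frac{1}{d_x}\sum_{y\sim x}(f(y)-f(x))$, with eigenvalues defined by $-\Delta f=\lambda f$, $f\ne0$. $\Gamma(f,g)=\frac12\{\Delta(fg)-g\Delta f-f\Delta g\}$, $\Gamma_2(f,g)=\frac12\{\Delta\Gamma(f,g)-\Gamma(g,\Delta f)-\Gamma(f,\Delta g)\}$. $G$ satisfies $CD(0,\infty)$ if $\Gamma_2(f,f)(x)\ge 0$ for all $f:V\to\mathbb{R}$ and all $x\in V$. *)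

(* Defs.v *)
From mathcomp Require Import all_boot all_order all_algebra.
From mathcomp Require Import Rstruct.
Set Implicit Arguments. Unset Strict Implicit. Unset Printing Implicit Defensive.
Import Order.TTheory GRing.Theory Num.Theory.
Local Open Scope ring_scope.

Notation R := Rdefinitions.R.

Section Graph.
Variables (T : finType) (e : rel T).

Definition simple_graph : Prop := symmetric e /\ irreflexive e.

Definition connected_graph : Prop := forall x y : T, connect e x y.

Definition triangle_free : Prop := forall x y z : T, ~ [/\ e x y, e y z & e x z].

Definition bipartite : Prop :=
  exists col : T -> bool, forall x y, e x y -> col x != col y.

Definition deg (x : T) : nat := #|[set y | e x y]|.

Definition max_deg : nat := \max_(x : T) deg x.

Definition walkn (n : nat) (x y : T) : bool :=
  [exists p : n.-tuple T, path e x p && (last x p == y)].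

(* graph distance: least n with a walk of length n from x to y
   (default #|T| if none, which never happens in a connected graph) *)
Definition gdist (x y : T) : nat :=
  \big[minn/#|T|]_(n < #|T| | walkn n x y) (n : nat).

Definition diameter : nat := \max_(x : T) \max_(y : T) gdist x y.

Definition lap (f : T -> R) : T -> R :=
  fun x => (deg x)%:R^-1 * \sum_(y | e x y) (f y - f x).

Definition Gam (f g : T -> R) : T -> R :=
  fun x => 2^-1 * (lap (fun z => f z * g z) x - g x * lap f x - f x * lap g x).

Definition Gam2 (f g : T -> R) : T -> R :=
  fun x => 2^-1 * (lap (Gam f g) x - Gam g (lap f) x - Gam f (lap g) x).

Definition CD0inf : Prop := forall (f : T -> R) (x : T), 0 <= Gam2 f f x.

Definition eigenpair (lambda : R) (f : T -> R) : Prop :=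
  (exists x, f x != 0) /\ forall x, - lap f x = lambda * f x.

End Graph.

(* Main.v *)
Require Import Defs.
From mathcomp Require Import all_boot all_order all_algebra.
From mathcomp Require Import Rstruct.
From mathcomp Require Import ring lra.
Import Order.TTheory GRing.Theory Num.Theory.
Local Open Scope ring_scope.
Set Implicit Arguments. Unset Strict Implicit. Unset Printing Implicit Defensive.

Lemma gam_formula (T : finType) (e : rel T) (f g : T -> R) (x : T) :
  Gam e f g x = 2^-1 * ((deg e x)%:R^-1 * \sum_(y | e x y) (f y - f x) * (g y - g x)).
Proof.
rewrite /Gam /lap; congr (_ * _).
set d := (deg e x)%:R^-1.
rewrite (mulrA (g x)) (mulrA (f x)) [g x * d]mulrC [f x * d]mulrC -!mulrA -!mulrBr; congr (_ * _).
rewrite !big_distrr /= -!sumrB.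
apply: eq_bigr => y _; ring.
Qed.

Lemma argmax_ex (T : finType) (h : T -> R) (t : T) : exists x0, forall y, h y <= h x0.
Proof.
by case: (@arg_maxP _ R T t xpredT h isT) => x0 _ H; exists x0 => y; apply: H.
Qed.

Lemma deg_gt0 (T : finType) (e : rel T) x y : e x y -> (0 < deg e x)%N.
Proof. by move=> exy; rewrite /deg; apply/card_gt0P; exists y; rewrite inE. Qed.

Lemma lap_argmax (T : finType) (e : rel T) (h : T -> R) x :
  (forall y, h y <= h x) -> lap e h x <= 0.
Proof.
move=> H; rewrite /lap mulr_ge0_le0 //; first by rewrite invr_ge0 ler0n.
by rewrite sumr_le0 // => y _; rewrite subr_le0.
Qed.

Lemma argmax_nb (T : finType) (e : rel T) (h : T -> R) x y :
  (forall z, h z <= h x) -> 0 <= lap e h x -> e x y -> h y = h x.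
Proof.
move=> H L exy.
have dpos : 0 < (deg e x)%:R^-1 :> R by rewrite invr_gt0 ltr0n (deg_gt0 exy).
move: L; rewrite /lap pmulr_rge0 // => L.
have S0 : \sum_(z | e x z) (h x - h z) = 0.
  apply/eqP; rewrite eq_le sumr_ge0 ?andbT; last by move=> z _; rewrite subr_ge0.
  by rewrite -oppr_ge0 -sumrN; under eq_bigr do rewrite opprB.
have Hz : forall z, e x z -> 0 <= h x - h z by move=> z _; rewrite subr_ge0.
by have /eqP := psumr_eq0P Hz S0 exy; rewrite subr_eq0 => /eqP ->.
Qed.

Lemma subharm (T : finType) (e : rel T) (h : T -> R) :
  connected_graph e -> (forall x, 0 <= lap e h x) -> forall x y, h x = h y.
Proof.
move=> conn L x y; case: (argmax_ex h x) => x0 H0.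
suff K : forall z, h z = h x0 by rewrite !K.
move=> z; have /connectP [p pth ->] := conn x0 z.
elim: p x0 H0 pth => [|a p IH] u Hu //= /andP [eua pth].
have ha : h a = h u := argmax_nb Hu (L u) eua.
by rewrite (IH a) // => w; rewrite ha; apply: Hu.
Qed.

Definition Gs (T : finType) (e : rel T) (s : R) (f : T -> R) (x : T) : R :=
  2^-1 * ((deg e x)%:R^-1 * \sum_(y | e x y) (f y - s * f x) ^+ 2).

Lemma sq_swap (s a b : R) : s ^+ 2 = 1 -> (s * a - b) ^+ 2 = (a - s * b) ^+ 2.
Proof.
move=> Hs; apply/eqP; rewrite -subr_eq0.
have -> : (s * a - b) ^+ 2 - (a - s * b) ^+ 2 = (s ^+ 2 - 1) * (a ^+ 2 - b ^+ 2) by ring.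
by rewrite Hs subrr mul0r.
Qed.

Lemma bochner (T : finType) (e : rel T) (s nu : R) (f : T -> R) :
  irreflexive e -> triangle_free e -> CD0inf e -> s ^+ 2 = 1 ->
  (forall x, (deg e x)%:R^-1 * \sum_(y | e x y) (f y - s * f x) = - (s * nu * f x)) ->
  forall x, 0 <= 2^-1 * lap e (Gs e s f) x + nu * Gs e s f x.
Proof.
move=> irr tf cd Hs Hev x.
pose g := fun z => if e x z then s * f z else f z.
have gx : g x = f x by rewrite /g irr.
have gy : forall y, e x y -> g y = s * f y by move=> y exy; rewrite /g exy.
have gz : forall y z, e x y -> e y z -> g z = f z.
  move=> y z exy eyz; rewrite /g; case: ifP => // exz.
  by exfalso; apply: (tf x y z); split.
have E0 : Gam e g g x = Gs e s f x.
  rewrite gam_formula /Gs; congr (_ * (_ * _)); apply: eq_bigr => y exy.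
  by rewrite gx gy // -expr2 sq_swap.
have E1 : lap e (Gam e g g) x = lap e (Gs e s f) x.
  rewrite /lap; congr (_ * _); apply: eq_bigr => y exy; congr (_ - _); last exact: E0.
  rewrite gam_formula /Gs; congr (_ * (_ * _)); apply: eq_bigr => z eyz.
  by rewrite (gz y z) // gy // -expr2.
have Ly : forall y, e x y -> lap e g y = - (s * nu * f y).
  move=> y exy; rewrite /lap -Hev; congr (_ * _); apply: eq_bigr => z eyz.
  by rewrite (gz y z) // gy.
have Lx : lap e g x = - (nu * f x).
  rewrite /lap.
  have -> : \sum_(y | e x y) (g y - g x) = s * \sum_(y | e x y) (f y - s * f x).
    rewrite big_distrr /=; apply: eq_bigr => y exy; rewrite gx gy //.
    have -> : s * (f y - s * f x) = s * f y - s ^+ 2 * f x by ring.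
    by rewrite Hs mul1r.
  rewrite mulrCA Hev.
  have -> : s * - (s * nu * f x) = - (s ^+ 2 * nu * f x) by ring.
  by rewrite Hs mul1r.
have E2 : Gam e g (lap e g) x = - (nu * Gs e s f x).
  rewrite gam_formula /Gs.
  have -> : \sum_(y | e x y) (g y - g x) * (lap e g y - lap e g x) =
            - nu * \sum_(y | e x y) (f y - s * f x) ^+ 2.
    rewrite big_distrr /=; apply: eq_bigr => y exy.
    rewrite gx gy // Ly // Lx -sq_swap //; ring.
  ring.
have := cd g x; rewrite /Gam2 E1 E2.
set a := lap e (Gs e s f) x; set b := nu * Gs e s f x.
lra.
Qed.

Lemma lap_lin (T : finType) (e : rel T) (a b : T -> R) (c : R) x :
  lap e (fun z => a z + c * b z) x = lap e a x + c * lap e b x.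
Proof.
rewrite /lap mulrCA -mulrDr; congr (_ * _); rewrite big_distrr -big_split /=.
by apply: eq_bigr => y _; ring.
Qed.

Lemma lap_sq (T : finType) (e : rel T) (s nu : R) (f : T -> R) :
  s ^+ 2 = 1 ->
  (forall x, (deg e x)%:R^-1 * \sum_(y | e x y) (f y - s * f x) = - (s * nu * f x)) ->
  forall x, lap e (fun z => f z ^+ 2) x = 2 * Gs e s f x - 2 * nu * f x ^+ 2.
Proof.
move=> Hs Hev x; rewrite /lap /Gs.
have -> : \sum_(y | e x y) (f y ^+ 2 - f x ^+ 2) =
   \sum_(y | e x y) (f y - s * f x) ^+ 2 + (2 * s * f x) * \sum_(y | e x y) (f y - s * f x).
  rewrite big_distrr -big_split /=; apply: eq_bigr => y _.
  apply/eqP; rewrite -subr_eq0.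
  have -> : f y ^+ 2 - f x ^+ 2 - ((f y - s * f x) ^+ 2 + 2 * s * f x * (f y - s * f x))
     = (s ^+ 2 - 1) * f x ^+ 2 by ring.
  by rewrite Hs subrr mul0r.
rewrite mulrDr mulrCA Hev.
have -> : 2 * s * f x * - (s * nu * f x) = - (2 * s ^+ 2 * nu * f x ^+ 2) by ring.
rewrite Hs mulr1.
have h2 : (2 : R) * 2^-1 = 1 by rewrite divff // pnatr_eq0.
by rewrite (mulrA 2) h2 mul1r.
Qed.

Lemma core (T : finType) (e : rel T) (s nu M2 : R) (f : T -> R) :
  s ^+ 2 = 1 -> 0 < nu ->
  (forall x, (deg e x)%:R^-1 * \sum_(y | e x y) (f y - s * f x) = - (s * nu * f x)) ->
  (forall x, 0 <= 2^-1 * lap e (Gs e s f) x + nu * Gs e s f x) ->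
  (forall x, f x ^+ 2 <= M2) ->
  forall x, Gs e s f x <= 4 * nu * M2.
Proof.
move=> Hs nu0 Hev B HM x.
pose F := fun z => Gs e s f z + (2 * nu) * f z ^+ 2.
have [x0 H0] := argmax_ex F x.
have L := lap_argmax e H0.
rewrite /F lap_lin (lap_sq Hs Hev) in L.
have B0 := B x0.
set G := Gs e s f x0 in L B0; set lG := lap e (Gs e s f) x0 in L B0.
set h := f x0 ^+ 2 in L.
have Hh : h <= M2 by apply: HM.
have h0 : 0 <= h by rewrite /h sqr_ge0.
have K : G <= 2 * nu * h by nra.
have Gx : Gs e s f x <= F x0.
  apply: le_trans (H0 x); rewrite /F lerDl; apply: mulr_ge0; [lra | exact: sqr_ge0].
apply: (le_trans Gx); rewrite /F -/G -/h; nra.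
Qed.

Lemma bigmin_le (I : eqType) (r : seq I) (P : pred I) (F : I -> nat) N i0 :
  i0 \in r -> P i0 -> (\big[minn/N]_(i <- r | P i) F i <= F i0)%N.
Proof.
elim: r => [|a r IH] //; rewrite inE big_cons => /orP [/eqP -> | ir] Pi.
  by rewrite Pi geq_minl.
case: ifP => _; last exact: IH.
by apply: leq_trans (geq_minr _ _) (IH ir Pi).
Qed.

Lemma gdist_walk (T : finType) (e : rel T) x y : connect e x y ->
  exists p, [/\ path e x p, last x p = y & size p = gdist e x y].
Proof.
move=> cxy.
have [p0 [pth0 lst0 sz0]] : exists p, [/\ path e x p, last x p = y & (size p < #|T|)%N].
  case/connectP: cxy => p pth ->; case/shortenP: pth => p' pth' uq _.
  exists p'; split => //.
  have := max_card (mem (x :: p')); rewrite (card_uniqP uq) /=; done.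
have Q : ((gdist e x y == #|T|) || walkn e (gdist e x y) x y)%N.
  rewrite /gdist; apply: (big_ind (fun m => (m == #|T|) || walkn e m x y)%N).
  - by rewrite eqxx.
  - move=> a b Ha Hb; rewrite /minn; by case: ifP.
  - by move=> i Hi; rewrite Hi orbT.
have Hle : (gdist e x y <= size p0)%N.
  rewrite /gdist; apply: (@bigmin_le 'I_#|T| (index_enum _) (fun n : 'I_#|T| => walkn e n x y) (fun n : 'I_#|T| => (n : nat)) #|T| (Ordinal sz0) (mem_index_enum _)) => /=.
  by apply/existsP; exists (in_tuple p0); rewrite pth0 lst0 eqxx.
have : gdist e x y != #|T|.
  by apply/eqP => E; move: Hle; rewrite E leqNgt sz0.
move: Q => /orP [/eqP -> | W]; first by rewrite eqxx.
move=> _; case/existsP: W => t /andP [pt /eqP lt].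
by exists t; split => //; rewrite size_tuple.
Qed.

Lemma gdist_le_diam (T : finType) (e : rel T) x y : (gdist e x y <= diameter e)%N.
Proof.
rewrite /diameter; apply: (leq_trans (@leq_bigmax _ (fun y => gdist e x y) y)).
exact: (@leq_bigmax _ (fun x => \max_y gdist e x y) x).
Qed.

Lemma deg_le_max (T : finType) (e : rel T) x : (deg e x <= max_deg e)%N.
Proof. rewrite /max_deg. exact: (@leq_bigmax T (fun y => deg e y) x). Qed.

Lemma sum_const_deg (T : finType) (e : rel T) x (c : R) :
  \sum_(y | e x y) c = c * (deg e x)%:R.
Proof.
rewrite /deg -sum1dep_card natr_sum big_distrr /=; apply: eq_bigr => y _; by rewrite mulr1.
Qed.

Lemma norm_s (s : R) : s ^+ 2 = 1 -> `|s| = 1.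
Proof.
move=> Hs; have /eqP := Hs; rewrite sqrf_eq1 => /orP [/eqP -> | /eqP ->].
  by rewrite normr1.
by rewrite normrN normr1.
Qed.

Lemma telesc (T : finType) (e : rel T) (f : T -> R) (s m : R) :
  s ^+ 2 = 1 -> (forall u v, e u v -> `|f v - s * f u| <= m) ->
  forall x p, path e x p -> `|f (last x p) - s ^+ (size p) * f x| <= (size p)%:R * m.
Proof.
move=> Hs Hm x p; elim: p x => [|a p IH] x /=.
  by move=> _; rewrite expr0 mul1r subrr normr0 mul0r.
move=> /andP [exa pth].
have -> : f (last a p) - s ^+ (size p).+1 * f x =
   (f (last a p) - s ^+ (size p) * f a) + s ^+ (size p) * (f a - s * f x).
  by rewrite exprSr; ring.
apply: (le_trans (ler_normD _ _)).
rewrite normrM normrX (norm_s Hs) expr1n mul1r -addn1 natrD mulrDl mul1r.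
by apply: lerD; [exact: IH | exact: Hm].
Qed.

Lemma lap_argmin (T : finType) (e : rel T) (h : T -> R) x :
  (forall y, h x <= h y) -> 0 <= lap e h x.
Proof.
move=> H; rewrite /lap mulr_ge0 //; first by rewrite invr_ge0 ler0n.
by rewrite sumr_ge0 // => y _; rewrite subr_ge0.
Qed.

Lemma edge_max (T : finType) (e : rel T) (f : T -> R) (s : R) :
  exists m, [/\ 0 <= m, (forall u v, e u v -> `|f v - s * f u| <= m) &
     (m = 0 \/ exists u v, e u v /\ m = `|f v - s * f u|)].
Proof.
case: (boolP [exists uv : T * T, e uv.1 uv.2]) => [/existsP [uv0 _] | /existsPn No].
  pose h := fun uv : T * T => if e uv.1 uv.2 then `|f uv.2 - s * f uv.1| else 0.
  have [w Hw] := argmax_ex h uv0.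
  have h0 : 0 <= h w by rewrite /h; case: ifP.
  exists (h w); split => //.
    by move=> u v euv; have := Hw (u, v); rewrite /h /= euv.
  rewrite /h; case: ifP => ew; last by left.
  by right; exists w.1, w.2.
exists 0; split => //; last by left.
by move=> u v euv; have := No (u, v); rewrite /= euv.
Qed.

Lemma nu_ge0 (T : finType) (e : rel T) (s nu : R) (f : T -> R) x0 :
  s ^+ 2 = 1 ->
  (forall x, (deg e x)%:R^-1 * \sum_(y | e x y) (f y - s * f x) = - (s * nu * f x)) ->
  (forall y, f y ^+ 2 <= f x0 ^+ 2) -> 0 < f x0 ^+ 2 -> 0 <= nu.
Proof.
move=> Hs Hev Hx0 P.
have E : nu * f x0 ^+ 2 =
   (deg e x0)%:R^-1 * \sum_(y | e x0 y) (f x0 ^+ 2 - s * f x0 * f y).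
  have -> : \sum_(y | e x0 y) (f x0 ^+ 2 - s * f x0 * f y) =
            (- (s * f x0)) * \sum_(y | e x0 y) (f y - s * f x0).
    rewrite big_distrr /=; apply: eq_bigr => y _.
    have -> : - (s * f x0) * (f y - s * f x0) = s ^+ 2 * f x0 ^+ 2 - s * f x0 * f y by ring.
    by rewrite Hs mul1r.
  rewrite [_%:R^-1 * _]mulrCA Hev.
  have -> : - (s * f x0) * - (s * nu * f x0) = s ^+ 2 * (nu * f x0 ^+ 2) by ring.
  by rewrite Hs mul1r.
have : 0 <= nu * f x0 ^+ 2.
  rewrite E mulr_ge0 //; first by rewrite invr_ge0 ler0n.
  rewrite sumr_ge0 // => y _.
  have := sqr_ge0 (s * f x0 - f y); have := Hx0 y; nra.
by rewrite pmulr_lge0.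
Qed.

Lemma Gs_lb (T : finType) (e : rel T) (s : R) (f : T -> R) (dm : nat) u v :
  e u v -> (deg e u <= dm)%N ->
  2^-1 * (dm%:R^-1 * (f v - s * f u) ^+ 2) <= Gs e s f u.
Proof.
move=> euv Hd; rewrite /Gs ler_pM2l ?invr_gt0 ?ltr0n //.
have dp := deg_gt0 euv.
apply: (@le_trans _ _ ((deg e u)%:R^-1 * (f v - s * f u) ^+ 2)).
  apply: ler_wpM2r; first exact: sqr_ge0.
  rewrite lef_pV2 ?posrE ?ltr0n //; first by rewrite ler_nat.
  exact: leq_trans Hd.
apply: ler_wpM2l; first by rewrite invr_ge0 ler0n.
rewrite (bigD1 v) //= lerDl sumr_ge0 // => y _; exact: sqr_ge0.
Qed.

Lemma arith (M2 d D q nu : R) : 0 < M2 -> 0 < d -> 0 < D ->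
  2^-1 * (d^-1 * q) <= 4 * nu * M2 -> 4 * M2 <= 9 * D ^+ 2 * q ->
  18^-1 / (d * D ^+ 2) <= nu.
Proof.
move=> M0 d0 D0 H1 H2.
have t0 : 0 < d * D ^+ 2 by rewrite mulr_gt0 // exprn_gt0.
rewrite ler_pdivrMr //.
have dn : d != 0 by rewrite gt_eqF.
have eq : q = d * (d^-1 * q) by rewrite mulrA divff ?mul1r.
move: H1 H2; set q' := d^-1 * q => H1 H2; rewrite eq in H2.
have H3 : q' <= 8 * nu * M2.
  rewrite -mulrA; move: H1; rewrite -mulrA; set w := nu * M2; lra.
have A : 4 * M2 <= 9 * D ^+ 2 * d * (8 * nu * M2).
  apply: (le_trans H2); rewrite mulrA; apply: ler_wpM2l => //.
  by rewrite mulr_ge0 // ?mulr_ge0 // ?sqr_ge0 // ltW.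
have B : 4 <= 72 * (nu * (d * D ^+ 2)).
  have : 4 * M2 <= (72 * (nu * (d * D ^+ 2))) * M2.
    apply: (le_trans A); rewrite le_eqVlt; apply/orP; left; apply/eqP; ring.
  by rewrite ler_pM2r.
lra.
Qed.

Lemma Gs_ge0 (T : finType) (e : rel T) s f x : 0 <= Gs e s f x.
Proof.
rewrite /Gs !mulr_ge0 // ?invr_ge0 ?ler0n //; last by rewrite sumr_ge0 // => y _; exact: sqr_ge0.
Qed.

Lemma excl (T : finType) (e : rel T) (f : T -> R) x0 :
  connected_graph e -> ~ bipartite e ->
  (forall x, (deg e x)%:R^-1 * \sum_(y | e x y) (f y - (-1) * f x) = - ((-1) * 0 * f x)) ->
  0 < f x0 ^+ 2 -> False.
Proof.
move=> conn nb Hev P.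
have Hs : (-1 : R) ^+ 2 = 1 by rewrite sqrrN expr1n.
have L := lap_sq Hs Hev.
have C : forall x y, f x ^+ 2 = f y ^+ 2.
  apply: subharm conn _ => x; rewrite L mulr0 mul0r subr0 mulr_ge0 //; exact: Gs_ge0.
have G0 : forall x, Gs e (-1) f x = 0.
  move=> x; have := L x; rewrite mulr0 mul0r subr0.
  have -> : lap e (fun z => f z ^+ 2) x = 0.
    by rewrite /lap big1 ?mulr0 // => y _; rewrite (C y x) subrr.
  move/eqP; rewrite eq_sym mulf_eq0 pnatr_eq0 /= => /eqP //.
have Ed : forall x y, e x y -> f y = - f x.
  move=> x y exy; have := G0 x; rewrite /Gs => /eqP; rewrite mulf_eq0 invr_eq0 pnatr_eq0 /=.
  have dn : (deg e x == 0)%N = false by apply/negbTE; rewrite -lt0n (deg_gt0 exy).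
  rewrite mulf_eq0 invr_eq0 pnatr_eq0 dn /= => /eqP S.
  have Hz : forall z, e x z -> 0 <= (f z - (-1) * f x) ^+ 2 by move=> z _; exact: sqr_ge0.
  have /eqP := psumr_eq0P Hz S exy; rewrite sqrf_eq0 mulN1r opprK addr_eq0 => /eqP //.
apply: nb; exists (fun x => 0 < f x) => x y exy.
rewrite (Ed x y exy) oppr_gt0.
have : f x != 0.
  apply/eqP => fx0; move: P; rewrite (C x0 x) fx0 expr0n /= ltxx //.
by case: (ltgtP (f x) 0) => //= _ _; rewrite lt_gtF.
Qed.

Theorem theorem1p3 :
  exists c C : R, 0 < c /\ 0 < C /\
  forall (T : finType) (e : rel T),
    simple_graph e -> connected_graph e -> triangle_free e -> ~ bipartite e ->
    CD0inf e ->
    forall (lambda : R) (f : T -> R), eigenpair e lambda f ->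
      (lambda = 0 -> exists k : R, forall x, f x = k) /\
      (lambda != 0 ->
         c / ((max_deg e)%:R * (diameter e)%:R ^+ 2) <= lambda /\
         lambda <= 2 - C / ((max_deg e)%:R * (diameter e)%:R ^+ 2)).
Proof.
exists 18^-1, 18^-1; split; first by rewrite invr_gt0 ltr0n.
split; first by rewrite invr_gt0 ltr0n.
move=> T e [sym irr] conn tf nb cd lam f [[xnz fnz] ev].
have [u0 [v0 e0]] : exists u v, e u v.
  case: (boolP [exists u, exists v, e u v]) => [/existsP [u /existsP [v euv]] | /existsPn No].
    by exists u, v.
  exfalso; apply: nb; exists (fun _ => true) => x y exy.
  by have := No x; move/existsPn => /(_ y); rewrite exy.
have degp : forall x, (0 < deg e x)%N.
  move=> x; have /connectP [p pth lst] := conn x u0.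
  case: p pth lst => [|a p] /=; first by move=> _ <-; exact: deg_gt0 e0.
  by move=> /andP [exa _] _; exact: deg_gt0 exa.
have lapf : forall x, lap e f x = - (lam * f x) by move=> x; rewrite -ev opprK.
have Hs1 : (1 : R) ^+ 2 = 1 by rewrite expr1n.
have Hs2 : (-1 : R) ^+ 2 = 1 by rewrite sqrrN expr1n.
have Hev1 : forall x, (deg e x)%:R^-1 * \sum_(y | e x y) (f y - 1 * f x) = - (1 * lam * f x).
  by move=> x; under eq_bigr do rewrite mul1r; rewrite mul1r -lapf.
have Hev2 : forall x, (deg e x)%:R^-1 * \sum_(y | e x y) (f y - (-1) * f x)
                      = - ((-1) * (2 - lam) * f x).
  move=> x.
  rewrite (eq_bigr (fun y => (f y - f x) + 2 * f x)); last by move=> y _; ring.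
  rewrite big_split /= sum_const_deg mulrDr.
  have -> : (deg e x)%:R^-1 * \sum_(i | e x i) (f i - f x) = lap e f x by [].
  rewrite lapf mulrCA mulVf ?mulr1 ?pnatr_eq0 -?lt0n ?degp //; ring.
have [x0 Hx0'] := argmax_ex (fun z => f z ^+ 2) xnz.
have Hx0 : forall y, f y ^+ 2 <= f x0 ^+ 2 := Hx0'.
have M0 : 0 < f x0 ^+ 2.
  have P : 0 < f xnz ^+ 2 by rewrite exprn_even_gt0 //= fnz orbT.
  have := Hx0 xnz; lra.
have lam0 : 0 <= lam := nu_ge0 Hs1 Hev1 Hx0 M0.
have mu0 : 0 <= 2 - lam := nu_ge0 Hs2 Hev2 Hx0 M0.
split.
  move=> l0; exists (f x0) => x.
  have L : forall y, 0 <= lap e f y by move=> y; rewrite lapf l0 mul0r oppr0.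
  exact: (@subharm T e f conn L x x0).
move=> ln0.
have sqn : forall a : R, a ^+ 2 = `|a| ^+ 2 by move=> a; rewrite -normrX ger0_norm // sqr_ge0.
have M0' : 0 < `|f x0| by rewrite normr_gt0; apply/eqP => fz; move: M0; rewrite fz expr0n ltxx.
set dm := max_deg e; set Dm := diameter e.
case: (posnP dm) => [dm0 | dmp].
  rewrite dm0 mul0r invr0 mulr0; split => //; lra.
case: (posnP Dm) => [Dm0 | Dmp].
  rewrite Dm0 expr0n /= mulr0 invr0 mulr0; split => //; lra.
have dmR : 0 < dm%:R :> R by rewrite ltr0n.
have DmR : 0 < Dm%:R :> R by rewrite ltr0n.
have D1 : 1 <= Dm%:R :> R by rewrite ler1n.
split.
  have lpos : 0 < lam by rewrite lt_def ln0 lam0.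
  have B1 := bochner irr tf cd Hs1 Hev1.
  have C1 := core Hs1 lpos Hev1 B1 Hx0.
  have [x1 Hx1'] := argmax_ex f x0.
  have [x2 Hx2'] := argmax_ex (fun z => - f z) x0.
  have Hx1 : forall y, f y <= f x1 := Hx1'.
  have Hx2 : forall y, f x2 <= f y by move=> y; have := Hx2' y => /=; lra.
  have f1 : 0 <= f x1.
    have := lap_argmax e Hx1; rewrite lapf oppr_le0 => H.
    by move: H; rewrite pmulr_rge0.
  have f2 : f x2 <= 0.
    have := lap_argmin e Hx2; rewrite lapf oppr_ge0 => H.
    by move: H; rewrite pmulr_rle0.
  have nf : `|f x0| <= f x1 - f x2.
    rewrite ler_norml; have := Hx1 x0; have := Hx2 x0; lra.
  have [p [pth lst sz]] := gdist_walk (conn x1 x2).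
  have kD : (size p <= Dm)%N by rewrite sz; exact: gdist_le_diam.
  have [m [m0 Hm Hme]] := edge_max e f 1.
  have tl := telesc Hs1 Hm pth.
  rewrite lst expr1n mul1r in tl.
  have nfm : `|f x0| <= Dm%:R * m.
    apply: (le_trans nf); apply: (le_trans _ (le_trans tl _)).
      by rewrite distrC ler_norm.
    by apply: ler_wpM2r => //; rewrite ler_nat.
  case: Hme => [m_eq0 | [u [v [euv mdef]]]].
    by move: nfm; rewrite m_eq0 mulr0; lra.
  have G := @Gs_lb T e 1 f dm u v euv (deg_le_max e u).
  apply: (arith (M2 := f x0 ^+ 2) (q := m ^+ 2)) => //.
    apply: (le_trans _ (le_trans G (C1 u))); rewrite mdef -sqn //.
  rewrite sqn; have : `|f x0| ^+ 2 <= (Dm%:R * m) ^+ 2.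
    by rewrite lerXn2r // ?nnegrE ?mulr_ge0 // ltW.
  rewrite exprMn; set a := `|f x0| ^+ 2; set b := Dm%:R ^+ 2 * m ^+ 2.
  rewrite -mulrA -/b; have : 0 <= b by rewrite /b mulr_ge0 // sqr_ge0.
  lra.
suff : 18^-1 / (dm%:R * Dm%:R ^+ 2) <= 2 - lam by lra.
have mu_ne0 : 2 - lam != 0.
  apply/negP => /eqP mz; apply: (excl conn nb _ M0) => x.
  by rewrite Hev2 mz.
have mupos : 0 < 2 - lam by rewrite lt_def mu_ne0 mu0.
have B2 := bochner irr tf cd Hs2 Hev2.
have C2 := core Hs2 mupos Hev2 B2 Hx0.
pose col := fun y => odd (gdist e x0 y).
have [u [v [euv cuv]]] : exists u v, e u v /\ col u = col v.
  case: (boolP [exists u, exists v, e u v && (col u == col v)]) =>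
      [/existsP [u /existsP [v /andP [euv /eqP cuv]]] | /existsPn No].
    by exists u, v.
  exfalso; apply: nb; exists col => x y exy; apply/negP => /eqP cxy.
  by have := No x; move/existsPn => /(_ y); rewrite exy cxy eqxx.
have [pa [pa_pth pa_l pa_s]] := gdist_walk (conn x0 u).
have [pb [pb_pth pb_l pb_s]] := gdist_walk (conn x0 v).
have [m [m0 Hm Hme]] := edge_max e f (-1).
have ta := telesc Hs2 Hm pa_pth.
have tb := telesc Hs2 Hm pb_pth.
rewrite pa_l pa_s in ta; rewrite pb_l pb_s in tb.
have sg : (-1) ^+ (gdist e x0 v) = (-1) ^+ (gdist e x0 u) :> R.
  by rewrite -signr_odd -[in RHS]signr_odd; congr (_ ^+ _); rewrite /col in cuv; rewrite cuv.
rewrite sg in tb.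
set sig := (-1) ^+ (gdist e x0 u) in ta tb sg.
have sig1 : `|sig| = 1 by apply: norm_s; rewrite /sig sqrr_sign.
have ea := Hm u v euv.
have au : (gdist e x0 u <= Dm)%N by exact: gdist_le_diam.
have bv : (gdist e x0 v <= Dm)%N by exact: gdist_le_diam.
have nfm : 2 * `|f x0| <= (2 * Dm%:R + 1) * m.
  have -> : 2 * `|f x0| = `|(f v - (-1) * f u) - (f u - sig * f x0) - (f v - sig * f x0)|.
    have -> : (f v - (-1) * f u) - (f u - sig * f x0) - (f v - sig * f x0) = (2 * sig) * f x0 by ring.
    by rewrite normrM normrM sig1 mulr1 ger0_norm.
  apply: (le_trans (ler_normB _ _)); apply: (le_trans (lerD (ler_normB _ _) (lexx _))).
  have A1 : (gdist e x0 u)%:R * m <= Dm%:R * m by apply: ler_wpM2r => //; rewrite ler_nat.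
  have A2 : (gdist e x0 v)%:R * m <= Dm%:R * m by apply: ler_wpM2r => //; rewrite ler_nat.
  have -> : (2 * Dm%:R + 1) * m = m + Dm%:R * m + Dm%:R * m by ring.
  apply: lerD; [apply: lerD => //; exact: le_trans ta A1 | exact: le_trans tb A2].
case: Hme => [m_eq0 | [u' [v' [euv' mdef]]]].
  by move: nfm; rewrite m_eq0 mulr0; lra.
have G := @Gs_lb T e (-1) f dm u' v' euv' (deg_le_max e u').
apply: (arith (M2 := f x0 ^+ 2) (q := m ^+ 2)) => //.
  apply: (le_trans _ (le_trans G (C2 u'))); rewrite mdef -sqn //.
rewrite sqn; have : (2 * `|f x0|) ^+ 2 <= ((2 * Dm%:R + 1) * m) ^+ 2.
  by rewrite lerXn2r // ?nnegrE ?mulr_ge0 // ?addr_ge0 ?mulr_ge0 // ltW.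
have : (2 * Dm%:R + 1) ^+ 2 <= 9 * Dm%:R ^+ 2 :> R by nra.
rewrite !exprMn; set a := `|f x0| ^+ 2; set b := m ^+ 2; set c := Dm%:R ^+ 2.
set w := (2 * Dm%:R + 1) ^+ 2 => Hw H.
have b0 : 0 <= b by rewrite /b sqr_ge0.
rewrite -mulrA; nra.
Qed.
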